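(* There is a constant $C$ such that for every regular unary language $L\subseteq\{a\}^*$, $\mathrm{nsyn}(L)\le C\cdot\mathrm{ns}(L)^2$.
   Context: $\mathrm{ns}(L)$ is the least number of states of an nfa (several initial states allowed) accepting $L$. $\mathrm{nsyn}(L)$ (nondeterministic syntactic complexity) is the least number of states of a subatomic nfa accepting $L$, i.e. an nfa every state of which accepts a language in the boolean subalgebra of $\mathcal{P}(\Sigma^* )$ generated by the two-sided derivatives $u^{-1}Lv^{-1}=\{w:uwv\in L\}$; equivalently, the least degree $|J(S)|$ of a boolean representation $\mathrm{Syn}(L)\to\mathbf{JSL}(S,S)$ extending the canonical representation $[w]_L\mapsto(K\mapsto w^{-1}K)$ on the semilattice of finite unions of left derivatives of $L$. *)

(* Defs.v *)
From Stdlib Require Import ClassicalEpsilon.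
From mathcomp Require Import all_boot.
Set Implicit Arguments. Unset Strict Implicit. Unset Printing Implicit Defensive.

Definition lang (S : finType) := seq S -> Prop.

(* Least natural number satisfying P (0 if none; classical choice). *)
Definition pdec (P : nat -> Prop) (n : nat) : bool :=
  if excluded_middle_informative (P n) then true else false.

Lemma pdec_ex (P : nat -> Prop) : (exists n, P n) -> exists n, pdec P n.
Proof.
case=> n Pn; exists n; rewrite /pdec.
by case: (excluded_middle_informative (P n)).
Qed.

Definition least_nat (P : nat -> Prop) : nat :=
  match excluded_middle_informative (exists n, P n) with
  | left h => ex_minn (pdec_ex h)
  | right _ => 0
  end.

Record nfa (S : finType) (n : nat) := Nfa {
  nfa_init : {set 'I_n};
  nfa_final : {set 'I_n};
  nfa_trans : S -> 'I_n -> {set 'I_n}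
}.

Fixpoint nfa_reach (S : finType) n (A : nfa S n) (X : {set 'I_n}) (w : seq S)
  : {set 'I_n} :=
  match w with
  | [::] => X
  | a :: w' => nfa_reach A (\bigcup_(q in X) nfa_trans A a q) w'
  end.

Definition nfa_state_acc (S : finType) n (A : nfa S n) (q : 'I_n) : lang S :=
  fun w => [exists p in nfa_reach A [set q] w, p \in nfa_final A].

Definition nfa_lang (S : finType) n (A : nfa S n) : lang S :=
  fun w => exists2 q, q \in nfa_init A & nfa_state_acc A q w.

Definition accepts (S : finType) n (A : nfa S n) (L : lang S) : Prop :=
  forall w, nfa_lang A w <-> L w.

Definition regular (S : finType) (L : lang S) : Prop :=
  exists n (A : nfa S n), accepts A L.

Definition two_sided_deriv (S : finType) (L : lang S) (u v : seq S) : lang S :=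
  fun w => L (u ++ w ++ v).

Definition is_two_sided_deriv (S : finType) (L : lang S) (K : lang S) : Prop :=
  exists u v, forall w, K w <-> two_sided_deriv L u v w.

(* boolean subalgebra of P(S^* ) generated by a family G of languages
   (languages identified extensionally) *)
Inductive in_bool_alg (S : finType) (G : lang S -> Prop) : lang S -> Prop :=
| ba_gen K : G K -> in_bool_alg G K
| ba_full : in_bool_alg G (fun _ => True)
| ba_compl K : in_bool_alg G K -> in_bool_alg G (fun w => ~ K w)
| ba_union K1 K2 : in_bool_alg G K1 -> in_bool_alg G K2 ->
    in_bool_alg G (fun w => K1 w \/ K2 w)
| ba_ext K K' : in_bool_alg G K -> (forall w, K w <-> K' w) -> in_bool_alg G K'.

Definition subatomic (S : finType) (L : lang S) n (A : nfa S n) : Prop :=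
  forall q : 'I_n, in_bool_alg (is_two_sided_deriv L) (nfa_state_acc A q).

Definition ns (S : finType) (L : lang S) : nat :=
  least_nat (fun n => exists A : nfa S n, accepts A L).

Definition nsyn (S : finType) (L : lang S) : nat :=
  least_nat (fun n => exists A : nfa S n, accepts A L /\ subatomic L A).

(* Main.v *)
Require Import Defs.
From Stdlib Require Import ClassicalEpsilon.
From mathcomp Require Import all_boot zify.
Set Implicit Arguments. Unset Strict Implicit. Unset Printing Implicit Defensive.

Fixpoint Rr n (A : nfa unit n) (x : 'I_n) k (y : 'I_n) : Prop :=
  match k with 0 => y = x | k'.+1 => exists2 x', x' \in nfa_trans A tt x & Rr A x' k' y end.

Definition accN n (A : nfa unit n) x k := exists2 y, Rr A x k y & y \in nfa_final A.

Lemma reach_acc n (A : nfa unit n) X w :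
  [exists p in nfa_reach A X w, p \in nfa_final A] <-> exists2 x, x \in X & accN A x (size w).
Proof.
elim: w X => [|a w IH] X /=.
  split.
    by case/exists_inP=> p pX pF; exists p => //; exists p.
  by case=> x xX [y /= -> yF]; apply/exists_inP; exists x.
case: a; rewrite IH; split.
  case=> x' /bigcupP [q qX xq] [y Ry yF]; exists q => //; exists y => //=; by exists x'.
case=> q qX [y [x' xq Ry] yF]; exists x'; first by apply/bigcupP; exists q.
by exists y.
Qed.

Lemma Rr_add n (A : nfa unit n) a b x z :
  Rr A x (a + b) z <-> exists y, Rr A x a y /\ Rr A y b z.
Proof.
elim: a x => [|a IH] x /=.
  by split; [exists x | case=> y [-> ]].
split.
  by case=> x' xx /IH [y [h1 h2]]; exists y; split => //; exists x'.
by case=> y [[x' xx h1] h2]; exists x' => //; apply/IH; exists y.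
Qed.

Lemma walk n (A : nfa unit n) K x z : Rr A x K z ->
  exists s : nat -> 'I_n, [/\ s 0 = x, s K = z &
     forall i j, i <= j -> j <= K -> Rr A (s i) (j - i) (s j)].
Proof.
elim: K x => [|K IH] x /=.
  move=> ez; exists (fun _ => x); split => // i j ij; rewrite leqn0 => /eqP j0.
  by move: ij; rewrite j0 leqn0 => /eqP ->.
case=> x' xx /IH [s [s0 sK sij]].
exists (fun m => if m is m'.+1 then s m' else x); split => //.
case=> [|i] [|j] //= ij jK.
- move: (sij 0 j (leq0n _) jK); rewrite s0 subn0 => h.
  by exists x'.
- exact: sij.
Qed.

Lemma pigeon (T : finType) m (f : 'I_m -> T) : #|T| < m ->
  exists i j : 'I_m, i < j /\ f i = f j.
Proof.
move=> hm.
case h: [exists i : 'I_m, exists j : 'I_m, (i < j) && (f i == f j)].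
  by case/existsP: h => i /existsP [j /andP [ij /eqP e]]; exists i, j.
have inj : injective f.
  move=> i j e; apply/eqP; case: (ltngtP i j) => // ij.
    by move/negbT: h; move/existsPn/(_ i)/existsPn/(_ j); rewrite ij e eqxx.
  by move/negbT: h; move/existsPn/(_ j)/existsPn/(_ i); rewrite ij e eqxx.
  by apply/eqP/val_inj.
by move: (@leq_card _ _ f inj); rewrite card_ord leqNgt hm.
Qed.

Lemma repeat_state n (A : nfa unit n) K x z : Rr A x K z -> n <= K ->
  exists c j e, [/\ 0 < e <= n, j <= n, Rr A x j c, Rr A c e c & Rr A c (K - j) z].
Proof.
move=> R nK; case: (walk R) => s [s0 sK sij].
have [i [j [ij e]]] := @pigeon _ n.+1 (fun i : 'I_n.+1 => s i) ltac:(by rewrite card_ord).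
have jn : j <= n by rewrite -ltnS.
exists (s i), i, (j - i); split.
- by rewrite subn_gt0 ij /=; apply: leq_trans (leq_subr _ _) jn.
- by apply: leq_trans jn; apply: ltnW.
- by move: (sij 0 i (leq0n _) (leq_trans (ltnW ij) (leq_trans jn nK))); rewrite s0 subn0.
- by move: (sij i j (ltnW ij) (leq_trans jn nK)); rewrite /= -e.
- by rewrite -sK; apply: sij => //; apply: leq_trans nK; apply: leq_trans jn; apply: ltnW.
Qed.

Lemma shorten n (A : nfa unit n) e M x z : 0 < e -> n * e <= M -> Rr A x M z ->
  exists d, [/\ 0 < d <= n * e, e %| d & Rr A x (M - d) z].
Proof.
move=> e0 neM R; case: (walk R) => s [s0 sK sij].
have [i [j [ij /= eq]]] := @pigeon _ (n * e).+1
   (fun i : 'I_(n * e).+1 => (s i, Ordinal (ltn_pmod i e0))) ltac:(by rewrite card_prod !card_ord).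
case: eq => eqs eqm.
have jn : j <= n * e by rewrite -ltnS.
exists (j - i); split.
- by rewrite subn_gt0 ij /=; apply: leq_trans (leq_subr _ _) jn.
- by rewrite -eqn_mod_dvd ?eqm // ltnW.
have h1 : Rr A x i (s i).
  by move: (sij 0 i (leq0n _) (leq_trans (ltnW ij) (leq_trans jn neM))); rewrite s0 subn0.
have h2 : Rr A (s i) (M - j) z by rewrite eqs -sK; apply: sij => //; apply: leq_trans neM.
have -> : M - (j - i) = i + (M - j).
  have := leq_trans jn neM; lia.
by apply/Rr_add; exists (s i).
Qed.

Lemma pump n (A : nfa unit n) c e M z q : Rr A c e c -> Rr A c M z -> Rr A c (q * e + M) z.
Proof.
move=> ce cM; elim: q => [|q IH] //.
by rewrite mulSn -addnA; apply/Rr_add; exists c.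
Qed.

Lemma reduce n (A : nfa unit n) c e z : 0 < e -> Rr A c e c ->
  forall m M, e %| m -> n * e + m <= M -> Rr A c M z -> Rr A c (M - m) z.
Proof.
move=> e0 ce m; elim: m {-2}m (leqnn m) => [|m IH] m' hm M dm hM R.
  by move: hm; rewrite leqn0 => /eqP ->; rewrite subn0.
case: (posnP m') => [->|m'0]; first by rewrite subn0.
have [d [/andP [d0 dne] dd R']] := shorten e0 (leq_trans (leq_addr _ _) hM) R.
case: (leqP d m') => dm'.
  have := IH (m' - d) ltac:(lia) (M - d) (dvdn_sub dm dd) ltac:(lia) R'.
  by have -> : M - d - (m' - d) = M - m' by lia.
have dM : d <= M by lia.
have := pump (((d - m') %/ e)) ce R'.
rewrite divnK ?dvdn_sub //.
by have -> : d - m' + (M - d) = M - m' by lia.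
Qed.

Definition Ln (L : lang unit) k := L (nseq k tt).

Lemma unit_word (w : seq unit) : w = nseq (size w) tt.
Proof. by elim: w => [|[] w IH] //=; rewrite -IH. Qed.

Definition Lk n (A : nfa unit n) k :=
  exists x z, [/\ x \in nfa_init A, z \in nfa_final A & Rr A x k z].

Lemma Ln_Lk n (A : nfa unit n) L : accepts A L -> forall k, Ln L k <-> Lk A k.
Proof.
move=> acc k; rewrite /Ln -acc /nfa_lang; split.
- case=> q qi /reach_acc [x /set1P -> [y Ry yF]]; rewrite size_nseq in Ry; by exists q, y.
- case=> x [z [xi zF R]]; exists x => //; apply/reach_acc; exists x; first by rewrite inE.
  by exists z; rewrite // size_nseq.
Qed.

Lemma F2 n (A : nfa unit n) k : n <= k -> Lk A k ->
  exists e, 0 < e <= n /\ forall q, Lk A (k + q * e).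
Proof.
move=> nk [x [z [xi zF R]]].
have [c [j [e [e0 jn R1 R2 R3]]]] := repeat_state R nk.
exists e; split => // q; exists x, z; split => //.
have -> : k + q * e = j + (q * e + (k - j)) by lia.
by apply/Rr_add; exists c; split => //; apply: pump.
Qed.

Lemma F1 n (A : nfa unit n) k : n * n + n <= k -> (Lk A k <-> Lk A (k + n`!)).
Proof.
move=> hk; split.
- move=> h; have [e [/andP [e0 en] H]] := F2 (leq_trans (leq_addl _ _) hk) h.
  by move: (H (n`! %/ e)); rewrite divnK // dvdn_fact // e0.
- case=> x [z [xi zF R]].
  have nK : n <= k + n`! by lia.
  have [c [j [e [/andP[e0 en] jn R1 R2 R3]]]] := repeat_state R nK.
  have ne : n * e <= n * n by rewrite leq_mul2l en orbT.
  have := reduce e0 R2 (dvdn_fact (ltac:(by rewrite e0 en) : 0 < e <= n))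
            (ltac:(lia) : n * e + n`! <= k + n`! - j) R3.
  move=> R4; exists x, z; split => //.
  have -> : k = j + (k + n`! - j - n`!) by lia.
  by apply/Rr_add; exists c.
Qed.

Lemma F1m n (A : nfa unit n) k m : n * n + n <= k -> (Lk A k <-> Lk A (k + m * n`!)).
Proof.
move=> hk; elim: m => [|m IH]; first by rewrite addn0.
rewrite IH mulSn (addnC n`!) addnA; apply: F1; lia.
Qed.

Definition Tn n := n * n + n.
Definition Z n (A : nfa unit n) e y :=
  forall k, Tn n <= k -> k %% e = (Tn n + y) %% e -> Lk A k.

Lemma Z_mod n (A : nfa unit n) e y1 y2 : y1 %% e = y2 %% e -> (Z A e y1 <-> Z A e y2).
Proof.
move=> h; have h' : (Tn n + y1) %% e = (Tn n + y2) %% e by rewrite -modnDmr h modnDmr.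
by rewrite /Z h'.
Qed.

Lemma Lk_shift n (A : nfa unit n) e k y : 0 < e <= n -> Tn n <= k -> k %% e = y %% e ->
  y <= k -> (forall q, Lk A (y + q * e)) -> Lk A k.
Proof.
move=> /andP [e0 en] Tk km yk H.
have ek : e %| k - y by rewrite -eqn_mod_dvd // km.
have := H ((k - y) %/ e); rewrite divnK //.
by have -> : y + (k - y) = k by lia.
Qed.

Lemma Z_fin n (A : nfa unit n) e y : 0 < e <= n ->
  (Z A e y <-> forall i, i < n`! %/ e -> Lk A (Tn n + y + i * e)).
Proof.
move=> /andP [e0 en]; split.
  move=> h i _; apply: h; first by rewrite /Tn; lia.
  by rewrite [Tn n + y + _]addnC modnMDl.
move=> h k Tk km.
have a0 : 0 < n`! %/ e by rewrite divn_gt0 // dvdn_leq ?fact_gt0 // dvdn_fact // e0.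
set k' := k + (Tn n + y) * n`!.
apply/(F1m A (Tn n + y) Tk); rewrite -/k'.
have hP : n`! %/ e * e = n`! by rewrite divnK // dvdn_fact // e0.
have fp := fact_gt0 n.
have hk' : Tn n + y <= k'.
  by have := leq_pmulr (Tn n + y) fp; rewrite /k'; lia.
have ek : e %| k' - (Tn n + y).
  rewrite -eqn_mod_dvd //.
  by rewrite /k' -modnDmr -hP mulnA modnMl addn0 km.
set q := (k' - (Tn n + y)) %/ e.
have hq : q * e = k' - (Tn n + y) by rewrite divnK.
set a := n`! %/ e.
have hd := divn_eq q a.
have -> : k' = Tn n + y + (q %% a) * e + (q %/ a) * n`!.
  rewrite -hP.
  have : q * e = (q %/ a * a + q %% a) * e by rewrite -hd.
  rewrite mulnDl -mulnA => h2.
  lia.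
rewrite -F1m; last by rewrite /Tn; lia.
by apply: h; rewrite ltn_pmod.
Qed.

Lemma key n (A : nfa unit n) x : Lk A (Tn n + x) <-> exists e' : 'I_n, Z A e'.+1 x.
Proof.
split; last first.
  by case=> e' h; apply: h => //; exact: leq_addr.
move=> h; have [e [/andP [e0 en] H]] := F2 (ltac:(rewrite /Tn; lia) : n <= Tn n + x) h.
have e'n : e.-1 < n by lia.
exists (Ordinal e'n); rewrite /= prednK //.
move=> k Tk km.
set k' := k + (Tn n + x) * n`!.
apply/(F1m A (Tn n + x) Tk); rewrite -/k'.
have fp := fact_gt0 n.
have hk' : Tn n + x <= k'.
  by have := leq_pmulr (Tn n + x) fp; rewrite /k'; lia.
have hP : n`! %/ e * e = n`! by rewrite divnK // dvdn_fact // e0.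
have km' : k' %% e = (Tn n + x) %% e.
  by rewrite /k' -modnDmr -hP mulnA modnMl addn0 km.
exact: (Lk_shift (ltac:(by rewrite e0 en) : 0 < e <= n) (ltac:(rewrite /k'; lia) : Tn n <= k') km' hk' H).
Qed.

Definition pb (P : Prop) : bool := if excluded_middle_informative P then true else false.
Lemma pbP (P : Prop) : pb P <-> P.
Proof. by rewrite /pb; case: excluded_middle_informative. Qed.

Fixpoint acc0 (Q : finType) (fin : {set Q}) (tr : Q -> {set Q}) q k : Prop :=
  match k with 0 => q \in fin | k'.+1 => exists2 q', q' \in tr q & acc0 fin tr q' k' end.

Definition mkB (Q : finType) (init fin : {set Q}) (tr : Q -> {set Q}) : nfa unit #|Q| :=
  Nfa [set i | enum_val i \in init] [set i | enum_val i \in fin]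
      (fun _ i => [set j | enum_val j \in tr (enum_val i)]).

Lemma accN0 n (A : nfa unit n) x : accN A x 0 <-> x \in nfa_final A.
Proof. by split; [case=> y /= -> | exists x]. Qed.

Lemma accNS n (A : nfa unit n) x k :
  accN A x k.+1 <-> exists2 x', x' \in nfa_trans A tt x & accN A x' k.
Proof.
split; first by case=> y [x' xx R] yF; exists x' => //; exists y.
by case=> x' xx [y R yF]; exists y => //; exists x'.
Qed.

Lemma mkB_acc (Q : finType) (init fin : {set Q}) (tr : Q -> {set Q}) i k :
  accN (mkB init fin tr) i k <-> acc0 fin tr (enum_val i) k.
Proof.
elim: k i => [|k IH] i.
  by rewrite accN0 /= inE.
rewrite accNS /=; split.
  by case=> j; rewrite inE => jt /IH h; exists (enum_val j).
case=> q qt h; exists (enum_rank q); first by rewrite inE enum_rankK.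
by apply/IH; rewrite enum_rankK.
Qed.

Lemma state_acc n (A : nfa unit n) q w : nfa_state_acc A q w <-> accN A q (size w).
Proof.
rewrite /nfa_state_acc reach_acc; split; first by case=> x /set1P ->.
by move=> h; exists q => //; rewrite inE.
Qed.

Lemma deriv_in (L : lang unit) a :
  in_bool_alg (is_two_sided_deriv L) (fun w => Ln L (a + size w)).
Proof.
apply: ba_gen; exists (nseq a tt), [::] => w.
by rewrite /two_sided_deriv cats0 /Ln nseqD -unit_word.
Qed.

Lemma inter_in (L : lang unit) (f : nat -> nat) N :
  in_bool_alg (is_two_sided_deriv L) (fun w => forall i, i < N -> Ln L (f i + size w)).
Proof.
elim: N => [|N IH].
  by apply: (ba_ext (ba_full _)) => w; split.
apply: (ba_ext (ba_compl (ba_union (ba_compl IH) (ba_compl (deriv_in L (f N)))))) => w.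
split.
  move=> h i; rewrite ltnS leq_eqVlt => /orP [/eqP -> | iN].
    by apply: NNPP => h2; apply: h; right.
  by apply: NNPP => h2; apply: h; left => h3; apply: h2; apply: h3.
by move=> h [h2|h2]; apply: h2 => *; apply: h => //; apply: ltnW.
Qed.

Definition Qt n := ('I_(Tn n) + 'I_n * 'I_n)%type.

Definition Phi n (A : nfa unit n) (q : Qt n) (x : nat) : Prop :=
  match q with inl i => Lk A (i + x) | inr (e', r) => Z A e'.+1 (r + x) end.

Definition init0 n : {set Qt n} := [set q : Qt n | if q is inl i then val i == 0 else false].
Definition fin0 n (A : nfa unit n) : {set Qt n} := [set q | pb (Phi A q 0)].
Definition tr0 n (q : Qt n) : {set Qt n} :=
  match q with
  | inl i => [set q' : Qt n | match q' with
                             | inl j => val j == i.+1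
                             | inr (e', r) => (i.+1 == Tn n) && (val r == 0) end]
  | inr (e', r) => [set q' : Qt n | match q' with
                             | inl _ => false
                             | inr (e'', r') => (e'' == e') && (val r' == r.+1 %% e'.+1) end]
  end.

Lemma acc0_Phi n (A : nfa unit n) x q : acc0 (fin0 A) (@tr0 n) q x <-> Phi A q x.
Proof.
elim: x q => [|x IH] q.
  by rewrite /= inE pbP.
rewrite /=; case: q => [i|[e' r]] /=.
  case: (ltnP i.+1 (Tn n)) => hi.
    split.
      case=> [[j|[e'' r]]]; rewrite inE //=.
        by move=> /eqP ej /IH /=; rewrite ej addSnnS.
      by rewrite (ltn_eqF hi).
    move=> h; exists (inl (Ordinal hi)); first by rewrite inE /=.
    apply/IH => /=; move: h; rewrite addSnnS; exact.
  have iT : i.+1 = Tn n by apply/eqP; rewrite eqn_leq hi ltn_ord.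
  rewrite -addSnnS iT key; split.
    case=> [[j|[e'' r]]]; rewrite inE //=.
      by move=> /eqP ej _; have := ltn_ord j; rewrite ej -iT ltnn.
    by rewrite ?iT eqxx /= => /eqP r0 /IH /=; rewrite r0 add0n => h; exists e''.
  case=> e'' h.
  have r0 : 0 < n by apply: leq_ltn_trans (ltn_ord e'').
  exists (inr (e'', Ordinal r0)); first by rewrite inE /= ?iT !eqxx.
  by apply/IH.
have rn : r.+1 %% e'.+1 < n by apply: leq_trans (ltn_pmod _ _) (ltn_ord e').
have hm : (r.+1 %% e'.+1 + x) %% e'.+1 = (r + x.+1) %% e'.+1 by rewrite modnDml addSnnS.
split.
  case=> [[j|[e'' r']]]; rewrite inE //=.
  move=> /andP [/eqP -> /eqP rr] /IH; rewrite /Phi rr.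
  exact: (Z_mod A hm).1.
move=> h; exists (inr (e', Ordinal rn)); first by rewrite inE /= !eqxx.
apply/IH; rewrite /Phi /=; exact: (Z_mod A hm).2.
Qed.

Lemma B_ok n (A : nfa unit n) L : accepts A L ->
  accepts (mkB (init0 n) (fin0 A) (@tr0 n)) L /\ subatomic L (mkB (init0 n) (fin0 A) (@tr0 n)).
Proof.
move=> acc; have LL := Ln_Lk acc.
have stB : forall i w, nfa_state_acc (mkB (init0 n) (fin0 A) (@tr0 n)) i w <->
                        Phi A (enum_val i) (size w).
  by move=> i w; rewrite state_acc mkB_acc acc0_Phi.
split.
  move=> w; have -> : L w <-> Lk A (size w) by rewrite -LL /Ln -unit_word.
  split.
    case=> i; rewrite inE stB /init0 inE; case: (enum_val i) => [j|[e' r]] //=.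
    by move=> /eqP -> .
  move=> h; have [x [_ [_ _ _]]] := h.
  have T0 : 0 < Tn n by rewrite /Tn; have := ltn_ord x; lia.
  exists (enum_rank (inl (Ordinal T0) : Qt n)); first by rewrite inE enum_rankK inE.
  by rewrite stB enum_rankK.
move=> i.
apply: (@ba_ext _ _ (fun w => Phi A (enum_val i) (size w))); last by move=> w; rewrite stB.
case: (enum_val i) => [j|[e' r]] /=.
  by apply: (ba_ext (deriv_in L j)) => w; rewrite LL.
have en : 0 < e'.+1 <= n by rewrite ltn_ord.
apply: (ba_ext (inter_in L (fun k => Tn n + r + k * e'.+1) (n`! %/ e'.+1))) => w.
rewrite Z_fin //; split => h k hk; move: (h k hk); rewrite LL;
  by have -> : Tn n + r + k * e'.+1 + size w = Tn n + (r + size w) + k * e'.+1 by lia.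
Qed.

Lemma least_natP (P : nat -> Prop) : (exists n, P n) -> P (least_nat P).
Proof.
move=> h; rewrite /least_nat; case: excluded_middle_informative => // h'.
case: ex_minnP => m; rewrite /pdec; by case: excluded_middle_informative.
Qed.

Lemma least_nat_le (P : nat -> Prop) m : P m -> least_nat P <= m.
Proof.
move=> pm; rewrite /least_nat; case: excluded_middle_informative => [h'|h]; last first.
  by case: h; exists m.
case: ex_minnP => k _ min; apply: min; rewrite /pdec.
by case: excluded_middle_informative.
Qed.

(* Unary alphabet {a} is modelled by the one-element type unit. *)
Theorem corollary5p4 :
  exists C : nat, forall L : lang unit, regular L -> nsyn L <= C * ns L ^ 2.
Proof.
exists 3 => L reg.
have [A accA] : exists A : nfa unit (ns L), accepts A L.
  exact: (@least_natP (fun n => exists A : nfa unit n, accepts A L) reg).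
have [accB subB] := B_ok accA.
apply: leq_trans (@least_nat_le (fun m => exists A : nfa unit m, accepts A L /\ subatomic L A) _
   (ex_intro _ _ (conj accB subB))) _.
rewrite card_sum card_prod !card_ord /Tn; nia.
Qed.
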